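(* Let $\theta$ be a finite rooted tree with $n\ge1$ nodes, in which every node $v$ carries a type $\eta_v\in\{0,1,2,3\}$, subject to the constraint: no node of type $0$ or $1$ has exactly one child (immediately preceding node) with that child being of type $0$ or $1$. Let $N_i^1(\theta)$ be the number of internal nodes (nodes with at least one child) of type $1$ in $\theta$. Then $N_i^1(\theta)\le \frac{2n-1}{3}$.
   Context: In a rooted tree, the children of a node $v$ are the nodes immediately preceding $v$ (i.e. whose outgoing line enters $v$); end-nodes are nodes with no children and internal nodes are the others. All nodes, including the root node, are counted in $n$. *)

(* Defs.v *)
From mathcomp Require Import all_boot.
Set Implicit Arguments. Unset Strict Implicit. Unset Printing Implicit Defensive.

(* A finite rooted tree whose nodes carry a type in {0,1,2,3}.
   [Node eta ts] is a node of type [eta] whose children (the nodes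
   immediately preceding it) are the roots of the subtrees [ts]. *)
Inductive ttree : Type := Node of 'I_4 & seq ttree.

Definition ttype (t : ttree) : 'I_4 := let: Node e _ := t in e.
Definition children (t : ttree) : seq ttree := let: Node _ ts := t in ts.

Fixpoint nnodes (t : ttree) : nat :=
  let: Node _ ts := t in (sumn (map nnodes ts)).+1.

Fixpoint N_int1 (t : ttree) : nat :=
  let: Node e ts := t in
  ((size ts != 0) && (val e == 1)) + sumn (map N_int1 ts).

Definition type01 (e : 'I_4) : bool := val e <= 1.

Definition node_ok (e : 'I_4) (ts : seq ttree) : bool :=
  ~~ [&& type01 e, size ts == 1 & all (fun c => type01 (ttype c)) ts].

Fixpoint admissible (t : ttree) : bool :=
  let: Node e ts := t in node_ok e ts && all admissible ts.

(* Main.v *)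
Require Import Defs.
From mathcomp Require Import all_boot.
From mathcomp Require Import zify.

Lemma sum_helper (ts : seq ttree) :
  (forall c, List.In c ts -> 3 * N_int1 c + 1 <= 2 * nnodes c) ->
  3 * sumn (map N_int1 ts) + size ts <= 2 * sumn (map nnodes ts).
Proof.
elim: ts => [|c ts IH] H //=.
have h1 := H c (or_introl erefl).
have h2 : 3 * sumn (map N_int1 ts) + size ts <= 2 * sumn (map nnodes ts).
  by apply: IH => d hd; apply: H; right.
lia.
Qed.

Lemma child_lt (ts : seq ttree) c : List.In c ts -> nnodes c <= sumn (map nnodes ts).
Proof.
elim: ts => [|d ts IH] //= [-> | h]; first lia.
have := IH h; lia.
Qed.

Lemma all_In (p : pred ttree) ts c : all p ts -> List.In c ts -> p c.
Proof. by elim: ts => [|d ts IH] //= /andP [h1 h2] [<- | h] //; apply: IH. Qed.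

Lemma key k : forall t, nnodes t <= k -> admissible t ->
  3 * N_int1 t + 1 + (1 < ttype t) <= 2 * nnodes t.
Proof.
elim: k => [[e ts] //|k IHk [e ts]] /= Hk /andP [Hok Hall].
have IH : forall c, List.In c ts -> 3 * N_int1 c + 1 + (1 < ttype c) <= 2 * nnodes c.
  move=> c hc; apply: IHk; last exact: (@all_In admissible ts c Hall hc).
  have := @child_lt ts c hc; lia.
have Hs := @sum_helper ts (fun c hc => leq_trans (leq_addr _ _) (IH c hc)).
case: e Hok => [[|[|[|[|m]]]] Hm] //= Hok; try lia.
case: ts Hok IH Hall Hs Hk => [|c [|d ts]] //= Hok IH Hall Hs Hk; try lia.
move: Hok; rewrite /node_ok /type01 /= andbT.
have := IH c (or_introl erefl).
case: (ttype c) => [[|[|[|[|m']]]] Hm'] //=; lia.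
Qed.

Theorem lemma2p1 (theta : ttree) :
  admissible theta -> 3 * N_int1 theta <= 2 * nnodes theta - 1.
Proof.
move=> H; have := @key (nnodes theta) theta (leqnn _) H; lia.
Qed.
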